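(* Let $\mathbf{B}\in\dot{\mathbb{P}}(\mathbb{L}(\mathbf{C}))$ with $|\mathbf{B}|=|\mathbf{C}|$, and suppose that all, or all but one, of the literals $L\in\mathbf{B}$ have a positive monotonic effect on $D$ relative to $\mathbf{C}$. Then $\mathbf{B}$ is singular for $\mathcal{D}(\mathbf{C},\Omega)$ if and only if $\mathbf{B}$ is irreducible for $\mathcal{D}(\mathbf{C},\Omega)$.
   Context: Events are binary random variables on a population $\Omega$; $\overline{X}=1-X$; $\mathbb{L}(\mathbf{C})=\mathbf{C}\cup\{\overline{X}:X\in\mathbf{C}\}$; $\dot{\mathbb{P}}(\mathbb{L}(\mathbf{C}))$ is the set of subsets of $\mathbb{L}(\mathbf{C})$ not containing both $X$ and $\overline{X}$; $(L)_{\mathbf{c}}$ is the value of literal $L$ under assignment $\mathbf{c}$; $\bigwedge(\mathbf{B})=\min_{L\in\mathbf{B}}L$. Potential outcomes $\mathcal{D}(\mathbf{C},\Omega)$: $D_{\mathbf{c}}(\omega)\in\{0,1\}$. A literal $L$ has a positive monotonic effect on $D$ relative to $\mathbf{C}$ if for all $\omega$ and assignments $\mathbf{c},\mathbf{c}'$ differing only in the variable underlying $L$ with $(L)_{\mathbf{c}}=1,(L)_{\mathbf{c}'}=0$, $D_{\mathbf{c}}(\omega)\ge D_{\mathbf{c}'}(\omega)$. $\mathbf{B}$ is a sufficient cause for $D$ relative to $\mathbf{C}$ for $\omega^*$ if some $\mathbf{c}^*$ has $(\bigwedge(\mathbf{B}))_{\mathbf{c}^*}=1$ and $D_{\mathbf{c}}(\omega^*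 )=1$ whenever $(\bigwedge(\mathbf{B}))_{\mathbf{c}}=1$; minimal if no proper subset is such; singular for $\omega^*$ if minimal and no other $\mathbf{B}'\in\dot{\mathbb{P}}(\mathbb{L}(\mathbf{C}))$ is a minimal sufficient cause for $\omega^*$; singular for $\mathcal{D}(\mathbf{C},\Omega)$ if singular for some $\omega^*$. A sufficient cause representation $(\mathbf{A},\mathfrak{B})$ for $\mathcal{D}(\mathbf{C},\Omega)$: binary random variables $\mathbf{A}=\langle A_1,\dots,A_p\rangle$ on $\Omega$ unaffected by interventions on $\mathbf{C}$ and $\mathfrak{B}=\langle\mathbf{B}_1,\dots,\mathbf{B}_p\rangle$, $\mathbf{B}_i\in\dot{\mathbb{P}}(\mathbb{L}(\mathbf{C}))$, with $D_{\mathbf{c}}(\omega)=1$ iff some $j$ has $A_j(\omega)=1$ and $(\bigwedge(\mathbf{B}_j))_{\mathbf{c}}=1$. $\mathbf{B}$ is irreducible for $\mathcal{D}(\mathbf{C},\Omega)$ if every such representation has some $\mathbf{B}_i\supseteq\mathbf{B}$. *)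

(* Defs.v *)
From mathcomp Require Import all_boot.
Set Implicit Arguments. Unset Strict Implicit. Unset Printing Implicit Defensive.

(* The set C of binary causes is indexed by a finite type T.
   An assignment c of values to C is a function T -> bool.
   A literal is a pair (X, b) : T * bool; (X, true) stands for X and
   (X, false) for its complement 1 - X. *)
Definition literal (T : finType) := (T * bool)%type.

Definition lit_val (T : finType) (L : literal T) (c : T -> bool) : bool :=
  c L.1 == L.2.

(* membership in P-dot(L(C)): no variable with both literals *)
Definition consistent (T : finType) (B : {set literal T}) : Prop :=
  forall X : T, ~ ((X, true) \in B /\ (X, false) \in B).

(* (/\ B)_c : minimum over the literals of B (1 for empty B) *)
Definition conj_val (T : finType) (B : {set literal T}) (c : T -> bool) : bool :=
  [forall L in B, lit_val L c].

(* Potential outcomes D_c(omega) are given by D omega c. *)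

Definition pos_monotonic (T : finType) (Omega : Type)
  (D : Omega -> (T -> bool) -> bool) (L : literal T) : Prop :=
  forall (w : Omega) (c c' : T -> bool),
    (forall Y : T, Y != L.1 -> c Y = c' Y) ->
    lit_val L c = true -> lit_val L c' = false ->
    D w c' <= D w c.

Definition sufficient_for (T : finType) (Omega : Type)
  (D : Omega -> (T -> bool) -> bool) (B : {set literal T}) (w : Omega) : Prop :=
  (exists cs : T -> bool, conj_val B cs) /\
  (forall c : T -> bool, conj_val B c -> D w c).

Definition minimal_sufficient_for (T : finType) (Omega : Type)
  (D : Omega -> (T -> bool) -> bool) (B : {set literal T}) (w : Omega) : Prop :=
  sufficient_for D B w /\
  (forall B' : {set literal T}, B' \proper B -> ~ sufficient_for D B' w).

Definition singular_for (T : finType) (Omega : Type)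
  (D : Omega -> (T -> bool) -> bool) (B : {set literal T}) (w : Omega) : Prop :=
  minimal_sufficient_for D B w /\
  (forall B' : {set literal T}, consistent B' -> B' <> B ->
     ~ minimal_sufficient_for D B' w).

Definition singular (T : finType) (Omega : Type)
  (D : Omega -> (T -> bool) -> bool) (B : {set literal T}) : Prop :=
  exists w : Omega, singular_for D B w.

Definition sc_representation (T : finType) (Omega : Type)
  (D : Omega -> (T -> bool) -> bool) (p : nat)
  (A : 'I_p -> Omega -> bool) (Bs : 'I_p -> {set literal T}) : Prop :=
  (forall j, consistent (Bs j)) /\
  (forall (w : Omega) (c : T -> bool),
     D w c = [exists j : 'I_p, A j w && conj_val (Bs j) c]).

Definition irreducible (T : finType) (Omega : Type)
  (D : Omega -> (T -> bool) -> bool) (B : {set literal T}) : Prop :=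
  forall (p : nat) (A : 'I_p -> Omega -> bool) (Bs : 'I_p -> {set literal T}),
    sc_representation D A Bs -> exists i : 'I_p, B \subset Bs i.

(* Main.v *)
Require Import Defs.
From mathcomp Require Import all_boot.
From Stdlib Require Import FunctionalExtensionality Classical.
Set Implicit Arguments. Unset Strict Implicit. Unset Printing Implicit Defensive.

Definition cBof (T : finType) (B : {set literal T}) (X : T) : bool := (X, true) \in B.
Definition flip (T : finType) (c : T -> bool) (X : T) : T -> bool :=
  fun Y => if Y == X then ~~ c Y else c Y.

Lemma inB_full (T : finType) (B : {set literal T}) :
  consistent B -> #|B| = #|T| -> forall X, (X, cBof B X) \in B.
Proof.
move=> cons card X; rewrite /cBof.
case Ht: ((X, true) \in B) => //.
have inj : {in B &, injective (fun L : literal T => L.1)}.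
  move=> [a b] [a' b'] H1 H2 /= eaa'; subst a'.
  by case: b b' H1 H2 => [] [] // H1 H2; exfalso; apply: (cons a); auto.
have : X \in [set L.1 | L in B].
  have -> : [set L.1 | L in B] = setT.
    apply/eqP; rewrite eqEcard subsetT cardsT card_in_imset //= card.
    by [].
  by rewrite in_setT.
case/imsetP => [[a b] Hab /= eXa]; subst a.
by case: b Hab; rewrite ?Ht.
Qed.

Lemma inB_iff (T : finType) (B : {set literal T}) :
  consistent B -> #|B| = #|T| -> forall L, (L \in B) = (L.2 == cBof B L.1).
Proof.
move=> cons card [X b] /=; apply/idP/eqP.
- move=> H; have H2 := inB_full cons card X.
  case: b H; case: (cBof B X) H2 => // H1 H2; exfalso; apply: (cons X); auto.
- by move=> ->; exact: inB_full.
Qed.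

Lemma conjB_eq (T : finType) (B : {set literal T}) c :
  consistent B -> #|B| = #|T| -> conj_val B c -> c = cBof B.
Proof.
move=> cons card /forallP H; apply: functional_extensionality => X.
have := H (X, cBof B X); rewrite inB_full //= /lit_val /=; by move/eqP.
Qed.

Lemma conjB_cB (T : finType) (B : {set literal T}) :
  consistent B -> #|B| = #|T| -> conj_val B (cBof B).
Proof.
move=> cons card; apply/forallP => L; apply/implyP.
by rewrite inB_iff // /lit_val => /eqP ->.
Qed.

Lemma agree_minus (T : finType) (B : {set literal T}) c X :
  consistent B -> #|B| = #|T| -> conj_val (B :\ (X, cBof B X)) c ->
  c = cBof B \/ c = flip (cBof B) X.
Proof.
move=> cons card /forallP H.
have HY : forall Y, Y != X -> c Y = cBof B Y.
  move=> Y nYX; have := H (Y, cBof B Y).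
  rewrite !inE inB_full // andbT /= /lit_val /=.
  have -> : (Y, cBof B Y) != (X, cBof B X) by apply: contra nYX => /eqP [->].
  by move/eqP.
case E: (c X == cBof B X); [left|right]; apply: functional_extensionality => Y.
- case: (eqVneq Y X) => [->|nYX]; [exact/eqP|exact: HY].
- rewrite /flip; case: (eqVneq Y X) => [->|nYX]; last exact: HY.
  by move/negbT: E; case: (c X); case: (cBof B X).
Qed.

Lemma msuff_a (T : finType) (Omega : Type) (D : Omega -> (T -> bool) -> bool)
  (B : {set literal T}) w :
  consistent B -> #|B| = #|T| -> minimal_sufficient_for D B w ->
  D w (cBof B) /\ forall X, D w (flip (cBof B) X) = false.
Proof.
move=> cons card [[_ suff] minB].
have DcB : D w (cBof B) by apply: suff; apply: conjB_cB.
split=> // X; apply/negP => HX.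
apply: (minB (B :\ (X, cBof B X))).
  by rewrite properD1 // inB_full.
split; first by exists (cBof B); apply/forallP => L; apply/implyP;
  rewrite inE => /andP [_ HL]; move: (forallP (conjB_cB cons card) L); rewrite HL.
by move=> c /agree_minus [] // ->.
Qed.

Lemma msuff_b (T : finType) (Omega : Type) (D : Omega -> (T -> bool) -> bool)
  (B : {set literal T}) w :
  consistent B -> #|B| = #|T| -> D w (cBof B) ->
  (forall X, D w (flip (cBof B) X) = false) -> minimal_sufficient_for D B w.
Proof.
move=> cons card DcB Dfl; split.
  split; first by exists (cBof B); apply: conjB_cB.
  by move=> c /conjB_eq -> //.
move=> B' /properP [sub [L HLB HLB']] [_ suff].
move: (HLB); rewrite inB_iff // => /eqP HL2.
have : D w (flip (cBof B) L.1).
  apply: suff; apply/forallP => L'; apply/implyP => HL'.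
  have HL'B := subsetP sub _ HL'.
  move: (HL'B); rewrite inB_iff // => /eqP HL'2.
  rewrite /lit_val /flip; case: (eqVneq L'.1 L.1) => [e|_]; last by rewrite HL'2.
  exfalso; move/negP: HLB'; apply.
  have -> : L = L'.
    case: L' HL'2 e {HL' HL'B} => a' b' /= -> ->.
    by case: L HL2 {HLB} => a b /= ->.
  exact: HL'.
by rewrite Dfl.
Qed.

Lemma chain (T : finType) (Omega : Type) (D : Omega -> (T -> bool) -> bool)
  (cB : T -> bool) (X0 : T) w :
  forall n (S : {set T}), #|S| = n -> X0 \notin S ->
  (forall Y, Y \in S -> pos_monotonic D (Y, cB Y)) ->
  D w (fun Y => if (Y == X0) || (Y \in S) then ~~ cB Y else cB Y)
  <= D w (fun Y => if (Y == X0) || (Y \in set0) then ~~ cB Y else cB Y).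
Proof.
elim=> [|n IH] S cS nX0 mono.
  by move/eqP: cS; rewrite cards_eq0 => /eqP ->.
have : 0 < #|S| by rewrite cS.
case/card_gt0P => Y HY.
have cS' : #|S :\ Y| = n by move: cS; rewrite (cardsD1 Y S) HY => -[].
apply: leq_trans (IH _ cS' _ _).
- apply: (mono Y HY w).
  + move=> Z nZY /=; by rewrite !inE (negbTE nZY).
  + rewrite /lit_val /= !inE eqxx /=.
    have -> : (Y == X0) = false by apply/eqP => e; move: nX0; rewrite -e HY.
    by rewrite orbF eqxx.
  + rewrite /lit_val /= HY orbT.
    by case: (cB Y).
- by rewrite !inE negb_and nX0 orbT.
- by move=> Z; rewrite !inE => /andP [_ HZ]; apply: mono.
Qed.

Lemma rep_of_fin (T : finType) (Omega : Type) (D : Omega -> (T -> bool) -> bool)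
  (U : finType) (A' : U -> Omega -> bool) (Bs' : U -> {set literal T}) :
  (forall u, consistent (Bs' u)) ->
  (forall w c, D w c = [exists u, A' u w && conj_val (Bs' u) c]) ->
  sc_representation D (fun j : 'I_#|U| => A' (enum_val j))
     (fun j => Bs' (enum_val j)).
Proof.
move=> cons HD; split=> [j|w c]; first exact: cons.
rewrite HD; apply/existsP/existsP => [[u Hu]|[j Hj]].
  by exists (enum_rank u); rewrite enum_rankK.
by exists (enum_val j).
Qed.

Theorem mainTheorem17 (T : finType) (Omega : Type)
  (D : Omega -> (T -> bool) -> bool) (B : {set literal T}) :
  consistent B ->
  #|B| = #|T| ->
  (exists L0 : literal T, forall L : literal T, L \in B -> L <> L0 ->
     pos_monotonic D L) ->
  (singular D B <-> irreducible D B).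
Proof.
move=> cons card [L0 mono]; set cB := cBof B; split.
- case=> w [msB _] p A Bs [consBs HD].
  have [DcB Dfl] := msuff_a cons card msB.
  move: (DcB); rewrite HD => /existsP [j /andP [Aj Cj]].
  exists j; apply/subsetP => L HL.
  apply/negPn/negP => HnL.
  move: HL; rewrite inB_iff // => /eqP HL.
  have : D w (flip cB L.1).
    rewrite HD; apply/existsP; exists j; rewrite Aj /=.
    apply/forallP => L'; apply/implyP => HL'.
    have := implyP (forallP Cj L') HL'; rewrite /lit_val /flip.
    case: (eqVneq L'.1 L.1) => [e|_] // /eqP HL'2.
    exfalso; move/negP: HnL; apply.
    have -> : L = L'.
      case: L' HL'2 e {HL'} => a' b' /= <- ->.
      by case: L HL => a b /= ->.
    exact: HL'.
  by rewrite Dfl.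
- move=> irr.
  have [w Hw] : exists w, D w cB && [forall X, ~~ D w (flip cB X)].
    apply: NNPP => Hn.
    have Hn' : forall w, D w cB -> exists X, D w (flip cB X).
      move=> w Dw; apply: NNPP => Hx; apply: Hn; exists w; rewrite Dw /=.
      by apply/forallP => X; apply/negP => HX; apply: Hx; exists X.
    pose cf : {ffun T -> bool} := [ffun X => cB X].
    pose U : finType := ({c : {ffun T -> bool} | c != cf} + T)%type.
    pose A' (u : U) w := match u with
      | inl c => D w (val c) | inr X => D w cB && D w (flip cB X) end.
    pose Bs' (u : U) := match u with
      | inl c => [set (X, val c X) | X : T] | inr X => B :\ (X, cB X) end.
    have rep := @rep_of_fin T Omega D U A' Bs'.
    have [] := irr _ _ _ (rep _ _).
    + case=> [c|X] Y.
      * rewrite /Bs' => -[/imsetP [Z _ [<- e1]] /imsetP [Z' _ [<- e2]]].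
        by rewrite -e1 in e2.
      * rewrite !inE => -[/andP [_ H1] /andP [_ H2]]; apply: (cons Y); auto.
    + move=> w c; apply/idP/existsP => [Dc|[[c'|X] /andP [Au Cu]]].
      * case: (eqVneq [ffun x => c x] cf) => [e|ne].
        -- have ec : c = cB.
             apply: functional_extensionality => X.
             by have := congr1 (fun f : {ffun T -> bool} => f X) e; rewrite !ffunE.
           subst c; have [X HX] := Hn' w Dc.
           exists (inr X); rewrite /= Dc HX /=.
           apply/forallP => L; apply/implyP; rewrite inE => /andP [_ HL].
           exact: (implyP (forallP (conjB_cB cons card) L) HL).
        -- exists (inl (exist (fun c0 : {ffun T -> bool} => c0 != cf) _ ne) : U); apply/andP; split.
           ++ rewrite /=.
              have -> : fun_of_fin [ffun x => c x] = c.
                by apply: functional_extensionality => x; rewrite ffunE.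
              exact: Dc.
           ++ apply/forallP => L; apply/implyP => /imsetP [Y _ ->].
              by rewrite /lit_val /= ffunE.
      * move: Au; rewrite /A'.
        have -> : c = (fun x => val c' x); last by [].
        apply: functional_extensionality => x.
        have := implyP (forallP Cu (x, val c' x)).
        rewrite /lit_val /=; move/(_ (imset_f _ _)) => H.
        by apply/eqP; apply: H.
      * move/andP: Au => [D1 D2].
        by case: (agree_minus cons card Cu) => ->.
    + move=> i; case: (enum_val i) => [c|X] HBs.
      * case/eqP: (valP c); apply/ffunP => X; rewrite ffunE.
        have := subsetP HBs _ (inB_full cons card X).
        by case/imsetP => Y _ [<- <-].
      * have := subsetP HBs _ (inB_full cons card X).
        by rewrite !inE eqxx.
  move/andP: Hw => [DcB /forallP Hfl].
  have ms := msuff_b cons card DcB (fun X => negbTE (Hfl X)).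
  exists w; split => // B' consB' neB' [[[cs Hcs] sB'] minB'].
  case: (boolP (B' \subset B)) => sub.
    have prop : B' \proper B by rewrite properEneq sub andbT; apply/eqP.
    by apply: (ms.2 B' prop); split; [exists cs | exact: sB'].
  case/subsetPn: sub => L' HL'B' HL'nB.
  pose S := [set Y | (Y, ~~ cB Y) \in B'].
  have X0'S : L'.1 \in S.
    rewrite inE; case: L' HL'B' HL'nB => a b /= H; rewrite inB_iff //= => Hn.
    have -> : ~~ cB a = b by move: Hn; rewrite /cB; case: (b); case: (cBof B a).
    exact: H.
  pose X0 := if L0.1 \in S then L0.1 else L'.1.
  have X0S : X0 \in S by rewrite /X0; case: ifP.
  have := @chain T Omega D cB X0 w _ (S :\ X0) erefl.
  rewrite !inE eqxx /= => /(_ isT).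
  have mono' : forall Y, Y \in S :\ X0 -> pos_monotonic D (Y, cB Y).
    move=> Y; rewrite !inE => /andP [nYX0 HYS].
    apply: mono; first exact: inB_full.
    move=> eL0; move: nYX0; rewrite /X0 -eL0 /= inE HYS.
    by rewrite eqxx.
  move/(_ mono').
  have -> : (fun Y => if (Y == X0) || (Y \in set0) then ~~ cB Y else cB Y)
            = flip cB X0.
    by apply: functional_extensionality => Y; rewrite inE orbF.
  rewrite (negbTE (Hfl X0)) => Hle.
  suff Hd : D w (fun Y : T => if (Y == X0) || (Y \in S :\ X0) then ~~ cB Y else cB Y)
    by rewrite Hd in Hle.
  apply: sB'; apply/forallP => [[Y b]]; apply/implyP => HYb.
  rewrite /lit_val /= !inE.
  have -> : (Y == X0) || (Y != X0) && ((Y, ~~ cB Y) \in B') = ((Y, ~~ cB Y) \in B').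
    by case: eqVneq => //= ->; move: X0S; rewrite inE => ->.
  case: (boolP (b == ~~ cB Y)) => [/eqP eb|nb].
    by rewrite -eb HYb.
  have eb : b = cB Y by move: nb; case: (b); case: (cB Y).
  subst b; case: ifP => // H; exfalso; apply: (consB' Y).
  by move: H HYb; case: (cB Y) => /= H1 H2; split.
Qed.
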